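(* Let $d=d_1+\dots+d_l$, ${\bf L}=\mathrm{Diag}({\bf L}_1,\dots,{\bf L}_l)$ with ${\bf L}_i\in\mathbb{S}^{d_i}_{++}$, and $q_1,\dots,q_l\in(0,1]$. Let ${\bf T}=\mathrm{Diag}({\bf T}_1,\dots,{\bf T}_l)$ with ${\bf T}_i=\frac{\eta_i}{q_i}{\bf I}_{d_i}$, $\eta_i\sim\mathrm{Bernoulli}(q_i)$. Let ${\bf D}:=(\mathbb{E}[{\bf T}{\bf L}{\bf T}])^{-1}$ (the optimal stepsize for det-CGD2), and for a constant $C_0>0$ (standing for $2(f(x^0)-f^{\inf})/\varepsilon^2$) define the communication complexity $\mathcal{C}(q):=\big(\sum_{i=1}^lq_id_i\big)\cdot\frac{C_0}{\det({\bf D})^{1/d}}$. Then $$\mathcal C(q)=C_0\Big(\sum_{i=1}^lq_id_i\Big)\prod_{i=1}^l\Big(\frac1{q_i}\Big)^{d_i/d}\det({\bf L})^{1/d}.$$ Moreover, $\mathcal C$ is minimized over $q\in(0,1]^l$ when all $q_i$ are equal, and the minimum value is $C_0\, d\,\det({\bf L})^{1/d}$.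
   Context: $\mathrm{Diag}(\cdot)$ denotes a block-diagonal matrix; $\mathbb{S}^{m}_{++}$: symmetric positive definite $m\times m$ matrices. Motivation: for det-CGD2, $x^{k+1}=x^k-{\bf T}^k{\bf D}\nabla f(x^k)$ with i.i.d. unbiased sketches ${\bf T}^k$, reaching $\frac1K\sum_k\mathbb{E}\|\nabla f(x^k)\|^2_{{\bf D}/\det({\bf D})^{1/d}}\le\varepsilon^2$ takes $K\ge 2(f(x^0)-f^{\inf})/(\varepsilon^2\det({\bf D})^{1/d})$ iterations, each sending $\sum_iq_id_i$ coordinates in expectation; $\mathcal C(q)$ is the product. *)

(* Defs.v *)
From HB Require Import structures.
From mathcomp Require Import all_boot all_order all_algebra.
From mathcomp Require Import all_classical all_reals.
From mathcomp Require Import exp.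
Set Implicit Arguments. Unset Strict Implicit. Unset Printing Implicit Defensive.
Import Order.TTheory GRing.Theory Num.Theory.
Local Open Scope ring_scope.

Section Defs.
Variable R : realType.

Definition posdef (m : nat) (A : 'M[R]_m) : Prop :=
  A^T = A /\ forall v : 'rV[R]_m, v != 0 -> 0 < (v *m A *m v^T) 0 0.

Variable l : nat.
Variable d : 'I_l -> nat.

Definition dim_tot : nat := (\sum_(i < l) d i)%N.

(* Expectation w.r.t. independent eta_i ~ Bernoulli(q_i), i < l:
   a realization of (eta_1,...,eta_l) is eta : {ffun 'I_l -> bool},
   with probability prod_i (q_i if eta_i else 1 - q_i). *)
Definition bern_weight (q : 'I_l -> R) (eta : {ffun 'I_l -> bool}) : R :=
  \prod_(i < l) (if eta i then q i else 1 - q i).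

Definition Ebern (q : 'I_l -> R) (m n : nat)
  (X : {ffun 'I_l -> bool} -> 'M[R]_(m, n)) : 'M[R]_(m, n) :=
  \sum_(eta : {ffun 'I_l -> bool}) bern_weight q eta *: X eta.

Definition Lmat (L : forall i : 'I_l, 'M[R]_(d i)) : 'M[R]_dim_tot :=
  \mxdiag_(i < l) L i.

Definition Tmat (q : 'I_l -> R) (eta : {ffun 'I_l -> bool}) : 'M[R]_dim_tot :=
  \mxdiag_(i < l) (((eta i)%:R / q i) *: (1%:M : 'M[R]_(d i))).

Definition Dmat (L : forall i : 'I_l, 'M[R]_(d i)) (q : 'I_l -> R) : 'M[R]_dim_tot :=
  invmx (Ebern q (fun eta => Tmat q eta *m Lmat L *m Tmat q eta)).

Definition commC (C0 : R) (L : forall i : 'I_l, 'M[R]_(d i)) (q : 'I_l -> R) : R :=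
  (\sum_(i < l) q i * (d i)%:R) * (C0 / ((\det (Dmat L q)) `^ (dim_tot%:R^-1))).

End Defs.

(* Main.v *)
Require Import Defs.
From HB Require Import structures.
From mathcomp Require Import all_boot all_order all_algebra.
From mathcomp Require Import all_classical all_reals.
From mathcomp Require Import exp.
From mathcomp Require Import polyrcf sequences.
From mathcomp.algebra_tactics Require Import ring lra.
Import Order.TTheory GRing.Theory Num.Theory.
Local Open Scope ring_scope.

Section M.
Variable R : realType.

Lemma det_castmx_sq m n (e : m = n) (A : 'M[R]_m) :
  \det (castmx (e, e) A) = \det A.
Proof. by case: n / e; rewrite castmx_id. Qed.

Lemma det_size0 n (A : 'M[R]_n) : n = 0%N -> \det A = 1.
Proof. move=> n0; move: A; rewrite n0 => A; exact: det_mx00. Qed.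

Lemma det_mxdiag p (p_ : 'I_p -> nat) (B : forall i, 'M[R]_(p_ i)) :
  \det (\mxdiag_i B i) = \prod_i \det (B i).
Proof.
elim: p p_ B => [|p IH] p_ B.
  by rewrite [RHS]big_ord0; apply: det_size0; rewrite big_ord0.
rewrite mxdiag_recl det_castmx_sq det_ublock IH big_ord_recl.
by [].
Qed.

Lemma mul_mxdiag p (p_ : 'I_p -> nat) (A B : forall i, 'M[R]_(p_ i)) :
  \mxdiag_i A i *m \mxdiag_i B i = \mxdiag_i (A i *m B i).
Proof.
rewrite {2}/mxdiag mul_mxdiag_mxblock /mxdiag; apply/eq_mxblock => i j.
by case: eqVneq => [->|]; rewrite ?conform_mx_id ?mulmx0.
Qed.

Lemma scale_mxdiag p (p_ : 'I_p -> nat) (a : R) (B : forall i, 'M[R]_(p_ i)) :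
  a *: \mxdiag_i B i = \mxdiag_i (a *: B i).
Proof.
rewrite -mul_scalar_mx -(mxdiagZ (p_ := p_)) mul_mxdiag.
by apply: eq_mxdiag => i; rewrite mul_scalar_mx.
Qed.

Lemma posdef_det_gt0 n (A : 'M[R]_n) : posdef A -> 0 < \det A.
Proof.
move=> [_ PD].
have H s : 0 <= s -> \det (A + s%:M) != 0.
  move=> s0; apply/negP => /det0P [v v0 vA].
  have := PD v v0.
  have : (v *m (A + s%:M) *m v^T) 0 0 = 0 by rewrite vA mul0mx mxE.
  rewrite mulmxDr mul_mx_scalar mulmxDl -scalemxAl mxE [X in _ + X]mxE => E.
  have y0 : 0 <= (v *m v^T) 0 0.
    by rewrite mxE; apply: sumr_ge0 => j _; rewrite mxE -expr2 sqr_ge0.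
  move=> x0; move: E; apply/eqP; rewrite gt_eqF //.
  by apply: ltr_wpDr => //; apply: mulr_ge0.
pose p := char_poly (- A).
have Ep s : p.[s] = \det (A + s%:M).
  rewrite -[p.[s]]/(horner_eval s p) /p /char_poly -det_map_mx.
  congr (\det _); apply/matrixP => i j; rewrite !mxE.
  transitivity (('X *+ (i == j) - (- A i j)%:P).[s]); first by [].
  by rewrite !hornerE hornerMn hornerX opprK addrC.
have := @sgp_pinftyP _ 0 p.
rewrite /sgp_pinfty (monicP (char_poly_monic _)) sgr1 => /(_ _ 0).
rewrite Ep raddf0 addr0 => E; rewrite -sgr_cp0 E //.
- move=> x; rewrite in_itv andbT => x0; rewrite /root Ep; exact: H.
- by rewrite in_itv /= lexx.
Qed.

Lemma Emean l (q : 'I_l -> R) i :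
  \sum_(eta : {ffun 'I_l -> bool}) bern_weight q eta * (eta i)%:R = q i.
Proof.
have E : \prod_(j < l) \sum_(b : bool)
    ((if b then q j else 1 - q j) * (if j == i then (b : nat)%:R else 1)) = q i.
  rewrite (bigD1 i) //= [X in _ * X]big1 ?mulr1.
    by rewrite big_bool /= eqxx mulr1 mulr0 addr0.
  move=> j /negbTE ->; rewrite big_bool /= !mulr1.
  by rewrite addrC subrK.
rewrite -{}E bigA_distr_bigA; apply: eq_bigr => eta _.
rewrite big_split /=; congr (_ * _).
rewrite (bigD1 i) //= eqxx [X in _ * X]big1 ?mulr1 //.
by move=> j /negbTE ->.
Qed.

Lemma E_TLT l (d : 'I_l -> nat) (L : forall i, 'M[R]_(d i)) (q : 'I_l -> R) :
  (forall i, q i != 0) ->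
  Ebern q (fun eta => Tmat d q eta *m Lmat L *m Tmat d q eta)
  = \mxdiag_i ((q i)^-1 *: L i).
Proof.
move=> hq.
rewrite /Ebern.
under eq_bigr => eta _ do rewrite /Tmat /Lmat !mul_mxdiag scale_mxdiag.
rewrite -mxdiag_sum; apply: eq_mxdiag => i.
under eq_bigr => eta _ do rewrite scalemx1 mul_scalar_mx mul_mx_scalar !scalerA.
rewrite -scaler_suml; congr (_ *: _).
transitivity (\sum_(eta : {ffun 'I_l -> bool}) bern_weight q eta * (eta i)%:R * (q i)^-2).
  apply: eq_bigr => eta _; case: (eta i) => /=.
    by rewrite !mul1r mulr1 -mulrA -invfM expr2.
  by rewrite !mul0r !mulr0 mul0r.
by rewrite -mulr_suml Emean expr2 invfM mulrA divff ?mul1r.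
Qed.


Lemma det_Dmat l (d : 'I_l -> nat) (L : forall i, 'M[R]_(d i)) (q : 'I_l -> R) :
  (forall i, q i != 0) ->
  \det (Dmat L q) = (\prod_i ((q i)^-1 ^+ d i * \det (L i)))^-1.
Proof.
move=> hq; rewrite /Dmat E_TLT // det_inv det_mxdiag.
by congr (_^-1); apply: eq_bigr => i _; rewrite detZ.
Qed.

Lemma ln_prod n (f : 'I_n -> R) : (forall i, 0 < f i) ->
  ln (\prod_i f i) = \sum_i ln (f i).
Proof.
elim: n f => [|n IH] f hf; first by rewrite !big_ord0 ln1.
rewrite !big_ord_recr /= lnM ?IH //; rewrite posrE //.
by apply: prodr_gt0.
Qed.

Lemma amgm l (w q : 'I_l -> R) :
  (forall i, 0 <= w i) -> (forall i, 0 < q i) -> 0 < \sum_i w i ->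
  \sum_i w i * ln (q i) <= (\sum_i w i) * ln ((\sum_i w i * q i) / \sum_i w i).
Proof.
move=> hw hq hW.
set W := \sum_i w i; set S := \sum_i w i * q i.
have hS : 0 < S.
  have wq0 i : 0 <= w i * q i by rewrite mulr_ge0 // ltW.
  rewrite lt_neqAle sumr_ge0 ?andbT //; apply/eqP => /esym E.
  have := psumr_eq0P (fun i _ => wq0 i) E => H.
  move: hW; rewrite /W big1 ?ltxx // => i _.
  by have /eqP := H i isT; rewrite mulf_eq0 (gt_eqF (hq i)) orbF => /eqP.
set A := S / W.
have hA : 0 < A by apply: divr_gt0.
have key i : w i * (1 + (ln (q i) - ln A)) <= w i * (q i / A).
  apply: ler_wpM2l => //.
  rewrite -ln_div ?posrE //.
  have := expR_ge1Dx (ln (q i / A)); rewrite lnK // posrE; exact: divr_gt0.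
have : \sum_i w i * (1 + (ln (q i) - ln A)) <= \sum_i w i * (q i / A).
  by apply: ler_sum => i _; exact: key.
under [X in _ <= X]eq_bigr => i _ do rewrite mulrA.
rewrite -mulr_suml.
under eq_bigr => i _ do rewrite mulrDr mulrBr mulr1.
rewrite big_split sumrB /= -mulr_suml.
rewrite -/W -/S (_ : S / A = W); last by rewrite /A invf_div mulrA mulrC mulrA mulVf ?mul1r // gt_eqF.
fold W; lra.
Qed.

End M.

Theorem corollary2 (R : realType) (l : nat) (d : 'I_l -> nat)
  (L : forall i : 'I_l, 'M[R]_(d i)) (C0 : R) :
  (0 < l)%N ->
  (forall i, 0 < d i)%N ->
  (forall i, posdef (L i)) ->
  0 < C0 ->
  (forall q : 'I_l -> R, (forall i, 0 < q i <= 1) ->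
     commC C0 L q =
       C0 * (\sum_(i < l) q i * (d i)%:R)
          * (\prod_(i < l) ((q i)^-1) `^ ((d i)%:R / (dim_tot d)%:R))
          * (\det (Lmat L)) `^ ((dim_tot d)%:R^-1))
  /\ (forall c : R, 0 < c <= 1 ->
        forall q' : 'I_l -> R, (forall i, 0 < q' i <= 1) ->
          commC C0 L (fun _ => c) <= commC C0 L q')
  /\ (forall c : R, 0 < c <= 1 ->
        commC C0 L (fun _ => c) = C0 * (dim_tot d)%:R * (\det (Lmat L)) `^ ((dim_tot d)%:R^-1)).
Proof.
move=> l0 hd hL hC0.
have hdim : (0 < dim_tot d)%N.
  by rewrite /dim_tot (bigD1 (Ordinal l0)) //= addn_gt0 hd.
set Dn := (dim_tot d)%:R : R.
have hDn : 0 < Dn by rewrite ltr0n.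
have hDnS : Dn = \sum_i (d i)%:R by rewrite /Dn /dim_tot natr_sum.
have hLi i : 0 < \det (L i) := @posdef_det_gt0 R _ _ (hL i).
set Ld := \det (Lmat L).
have hLd : Ld = \prod_i \det (L i) by rewrite /Ld /Lmat det_mxdiag.
have hLd0 : 0 < Ld by rewrite hLd; apply: prodr_gt0 => i _.
have F q : (forall i, 0 < q i) -> commC C0 L q =
    C0 * (\sum_i q i * (d i)%:R) *
    expR (Dn^-1 * (\sum_i (d i)%:R * ln (q i)^-1 + ln Ld)).
  move=> hq.
  have hq' i : q i != 0 by rewrite gt_eqF.
  rewrite /commC det_Dmat //.
  set X := \prod_i _.
  have hX i : 0 < (q i)^-1 ^+ d i * \det (L i).
    by rewrite mulr_gt0 // exprn_gt0 // invr_gt0.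
  have hX0 : 0 < X by apply: prodr_gt0 => i _.
  have lnX : ln X = \sum_i (d i)%:R * ln (q i)^-1 + ln Ld.
    rewrite /X ln_prod // hLd ln_prod // -big_split; apply: eq_bigr => i _.
    rewrite lnM ?posrE ?exprn_gt0 ?invr_gt0 // lnXn ?invr_gt0 //.
    by rewrite mulr_natl.
  rewrite /powR gt_eqF ?invr_gt0 // lnV ?posrE // lnX mulrN expRN invrK.
  rewrite -/Dn; ring.
have H3 c : 0 < c <= 1 ->
    commC C0 L (fun _ => c) = C0 * Dn * Ld `^ (Dn^-1).
  case/andP=> c0 _.
  rewrite F // -mulr_sumr -hDnS -mulr_suml -hDnS mulrDr (mulrA Dn^-1) mulVf ?gt_eqF //.
  rewrite mul1r expRD lnK ?posrE ?invr_gt0 // /powR (gt_eqF hLd0).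
  field; by rewrite gt_eqF.
split.
  move=> q hq.
  have hq0 i : 0 < q i by case/andP: (hq i).
  rewrite F //.
  have P1 : \prod_i ((q i)^-1 `^ ((d i)%:R / Dn)) =
      expR (Dn^-1 * \sum_i (d i)%:R * ln (q i)^-1).
    rewrite mulr_sumr expR_sum; apply: eq_bigr => i _.
    rewrite /powR gt_eqF ?invr_gt0 //; congr expR; ring.
  rewrite P1 /powR (gt_eqF hLd0) mulrDr expRD; ring.
split; last exact: H3.
move=> c hc q hq.
have hq0 i : 0 < q i by case/andP: (hq i).
rewrite H3 // F //.
have lnVq i : ln (q i)^-1 = - ln (q i) by rewrite lnV // posrE.
set G := \sum_i (d i)%:R * ln (q i).
have -> : \sum_i (d i)%:R * ln (q i)^-1 = - G.
  by rewrite /G -sumrN; apply: eq_bigr => i _; rewrite lnVq mulrN.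
set S := \sum_i q i * (d i)%:R.
have hS : S = \sum_i (d i)%:R * q i by apply: eq_bigr => i _; rewrite mulrC.
have hS0 : 0 < S.
  rewrite hS; apply: lt_le_trans (_ : (d (Ordinal l0))%:R * q (Ordinal l0) <= _).
    by rewrite mulr_gt0 // ltr0n.
  rewrite (bigD1 (Ordinal l0)) //= lerDl; apply: sumr_ge0 => i _.
  by rewrite mulr_ge0 // ltW.
have AM : G <= Dn * ln (S / Dn).
  rewrite hS hDnS; apply: amgm => //.
  by rewrite -hDnS.
set K := ln Ld.
have E1 : Dn / S <= expR (- (Dn^-1 * G)).
  rewrite -[Dn / S]lnK ?posrE ?divr_gt0 // ler_expR.
  rewrite -invf_div lnV ?posrE ?divr_gt0 // lerN2 ler_pdivrMl //.
have E2 : Dn <= S * expR (- (Dn^-1 * G)).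
  by rewrite -ler_pdivrMl // mulrC.
have EK : 0 < expR (Dn^-1 * K) := expR_gt0 _.
rewrite mulrDr expRD mulrN /powR (gt_eqF hLd0) -/K.
rewrite [X in _ <= X]mulrA; apply: ler_wpM2r; first exact: ltW.
by rewrite -mulrA; apply: ler_wpM2l => //; exact: ltW.
Qed.
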